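(* Let $(X,d)$ be a metric space and $T:X\to X$ a mapping for which there is $\lambda\in[0,1)$ with $d(Tx,Ty)\le\lambda\,d(x,y)$ for all $x,y\in X$. Then there exist an integer $p\ge 1$ and a constant $\alpha\in[0,\tfrac12)$ such that \[ d(T^p x,T^p y)\le \alpha\big(d(x,T^p y)+d(y,T^p x)\big)\quad\text{for all } x,y\in X. \]
   Context: $T^p$ denotes the $p$-fold composition of $T$ with itself. *)

(* Defs.v *)
From Stdlib Require Import Reals.
Open Scope R_scope.

Definition is_metric {X : Type} (d : X -> X -> R) : Prop :=
  (forall x y, 0 <= d x y) /\
  (forall x y, d x y = 0 <-> x = y) /\
  (forall x y, d x y = d y x) /\
  (forall x y z, d x z <= d x y + d y z).

Definition iterT {X : Type} (p : nat) (T : X -> X) : X -> X :=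
  fun x => Nat.iter p T x.

(* Main.v *)
Require Import Defs.
From Stdlib Require Import Reals Lra Lia.
Open Scope R_scope.

Lemma iter_contr (X : Type) (d : X -> X -> R) (T : X -> X) lam
  (hl : 0 <= lam) (hc : forall x y : X, d (T x) (T y) <= lam * d x y) :
  forall n x y, d (iterT n T x) (iterT n T y) <= lam ^ n * d x y.
Proof.
  induction n; intros x y; unfold iterT in *; simpl.
  - lra.
  - eapply Rle_trans. apply hc.
    rewrite Rmult_assoc. apply Rmult_le_compat_l; auto.
Qed.

Theorem mainTheorem3 (X : Type) (d : X -> X -> R) (T : X -> X)
  (hd : is_metric d)
  (hT : exists lam : R, 0 <= lam < 1 /\
          forall x y : X, d (T x) (T y) <= lam * d x y) :
  exists (p : nat) (alpha : R), (1 <= p)%nat /\ 0 <= alpha < 1/2 /\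
    forall x y : X,
      d (iterT p T x) (iterT p T y)
        <= alpha * (d x (iterT p T y) + d y (iterT p T x)).
Proof.
  destruct hT as [lam [[h0 h1] hc]].
  destruct hd as [dpos [dz [dsym dtri]]].
  assert (Hl : Rabs lam < 1) by (rewrite Rabs_right; lra).
  destruct (pow_lt_1_zero lam Hl (1/3)) as [N HN]; [lra|].
  set (p := S N).
  set (L := lam ^ p).
  assert (HL : L < 1/3).
  { specialize (HN p ltac:(unfold p; lia)). rewrite Rabs_right in HN; auto.
    apply Rle_ge, pow_le; auto. }
  assert (HL0 : 0 <= L) by (apply pow_le; auto).
  exists p, (L / (1 - L)). split; [unfold p; lia|]. split.
  - split.
    + apply Rmult_le_pos; auto. left; apply Rinv_0_lt_compat; lra.
    + apply (Rmult_lt_reg_r (1 - L)); [lra|].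
      unfold Rdiv. rewrite Rmult_assoc, Rinv_l by lra. lra.
  - intros x y.
    set (a := iterT p T x). set (b := iterT p T y).
    assert (Hc : d a b <= L * d x y) by (apply iter_contr; auto).
    assert (Ht : d x y <= d x b + d b a + d a y).
    { eapply Rle_trans. apply (dtri x b y).
      assert (d b y <= d b a + d a y) by apply dtri. lra. }
    rewrite (dsym b a) in Ht. rewrite (dsym a y) in Ht.
    assert (Hp := dpos a b).
    assert (H2 : (1 - L) * d a b <= L * (d x b + d y a)) by nra.
    apply (Rmult_le_reg_l (1 - L)); [lra|].
    replace ((1 - L) * (L / (1 - L) * (d x b + d y a))) with (L * (d x b + d y a)).
    + exact H2.
    + field. lra.
Qed.
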